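(* Let $0<\lambda<\frac{5-\sqrt{21}}{2}$ and let $K$ be the attractor of the IFS $f_1(x)=\lambda x$, $f_2(x)=\lambda x+2\lambda$, $f_3(x)=\lambda x+3\lambda-\lambda^2$, $f_4(x)=\lambda x+1-\lambda$. Then $U_{2i+1}=\emptyset$ for every integer $i\ge1$.
   Context: A coding of $x\in K$ is a sequence $(i_n)\in\{1,2,3,4\}^{\mathbb{N}}$ with $x=\lim_{n\to\infty}f_{i_1}\circ\cdots\circ f_{i_n}(0)$. $U_k$ denotes the set of $x\in K$ having exactly $k$ distinct codings. *)

(* Defs.v *)
From Stdlib Require Import Reals List.
Open Scope R_scope.

Inductive digit : Type := D1 | D2 | D3 | D4.

Definition ifs_map (lam : R) (d : digit) (x : R) : R :=
  match d with
  | D1 => lam * x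
  | D2 => lam * x + 2 * lam
  | D3 => lam * x + 3 * lam - lam ^ 2
  | D4 => lam * x + 1 - lam
  end.

(* comp lam c n x = f_{c 0} o f_{c 1} o ... o f_{c (n-1)} (x) *)
Fixpoint comp (lam : R) (c : nat -> digit) (n : nat) (x : R) : R :=
  match n with
  | O => x
  | S m => comp lam c m (ifs_map lam (c m) x)
  end.

Definition is_coding (lam : R) (x : R) (c : nat -> digit) : Prop :=
  Un_cv (fun n => comp lam c n 0) x.

Definition in_attractor (lam : R) (x : R) : Prop :=
  exists c, is_coding lam x c.

Definition in_U (lam : R) (k : nat) (x : R) : Prop :=
  in_attractor lam x /\
  exists l : list (nat -> digit),
    length l = k /\ NoDup l /\ (forall c, is_coding lam x c <-> In c l).

(* Main.v *)
Require Import Defs.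
From Stdlib Require Import Reals Lra Lia Psatz List Classical FunctionalExtensionality.
Import Defs.
Open Scope R_scope.

Definition shift (c : nat -> digit) : nat -> digit := fun n => c (S n).
Definition tail (c : nat -> digit) (k : nat) : nat -> digit := fun n => c (k + n)%nat.

Definition off (lam : R) (d : digit) : R :=
  match d with D1 => 0 | D2 => 2 * lam | D3 => 3 * lam - lam ^ 2 | D4 => 1 - lam end.

Lemma ifs_off (lam : R) d (z : R) : ifs_map lam d z = lam * z + off lam d.
Proof. destruct d; simpl; ring. Qed.

Lemma comp_S_shift (lam : R) (c : nat -> digit) (n : nat) (z : R) :
  comp lam c (S n) z = ifs_map lam (c 0%nat) (comp lam (shift c) n z).
Proof.
  revert z; induction n; intro z.
  - reflexivity.
  - change (comp lam c (S n) (ifs_map lam (c (S n)) z) =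
            ifs_map lam (c 0%nat) (comp lam (shift c) n (ifs_map lam (shift c n) z))).
    rewrite IHn. reflexivity.
Qed.

Lemma comp_add (lam : R) (c : nat -> digit) (n m : nat) (z : R) :
  comp lam c (n + m) z = comp lam c n (comp lam (tail c n) m z).
Proof.
  revert z; induction m; intro z.
  - rewrite Nat.add_0_r. reflexivity.
  - rewrite Nat.add_succ_r. simpl. rewrite IHm. reflexivity.
Qed.

Lemma comp_ext (lam : R) (a b : nat -> digit) (k : nat) (z : R) :
  (forall j, (j < k)%nat -> a j = b j) -> comp lam a k z = comp lam b k z.
Proof.
  revert z; induction k; intros z H.
  - reflexivity.
  - simpl. rewrite H by lia. apply IHk. intros; apply H; lia.
Qed.

Lemma lim_bound (u : nat -> R) (l a b : R) : Un_cv u l -> (forall n, a <= u n <= b) -> a <= l <= b.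
Proof.
  intros Hc Hb. split.
  - destruct (Rle_or_lt a l) as [|H]; auto.
    destruct (Hc (a - l)) as [N HN]; [lra|].
    specialize (HN N (le_n N)). specialize (Hb N). unfold R_dist in HN.
    apply Rabs_def2 in HN. lra.
  - destruct (Rle_or_lt l b) as [|H]; auto.
    destruct (Hc (l - b)) as [N HN]; [lra|].
    specialize (HN N (le_n N)). specialize (Hb N). unfold R_dist in HN.
    apply Rabs_def2 in HN. lra.
Qed.

Lemma cv_affine_shift (u : nat -> R) (l a b : R) (v : nat -> R) :
  Un_cv u l -> (forall n, v n = a * u (S n) + b) -> Un_cv v (a * l + b).
Proof.
  intros Hc Hv eps Heps.
  destruct (Req_dec a 0) as [Ha|Ha].
  - exists 0%nat. intros n _. unfold R_dist. rewrite Hv, Ha.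
    replace (0 * u (S n) + b - (0 * l + b)) with 0 by ring. rewrite Rabs_R0. lra.
  - assert (Hpos : 0 < Rabs a) by (apply Rabs_pos_lt; auto).
    destruct (Hc (eps / Rabs a)) as [N HN].
    { apply Rdiv_lt_0_compat; auto. }
    exists N. intros n Hn. unfold R_dist. rewrite Hv.
    replace (a * u (S n) + b - (a * l + b)) with (a * (u (S n) - l)) by ring.
    rewrite Rabs_mult. specialize (HN (S n) ltac:(lia)). unfold R_dist in HN.
    apply (Rmult_lt_compat_l (Rabs a)) in HN; auto.
    replace (Rabs a * (eps / Rabs a)) with eps in HN by (field; lra). exact HN.
Qed.

Lemma cv_ev (u v : nat -> R) (l : R) (N : nat) : Un_cv u l -> (forall n, (N <= n)%nat -> v n = u n) -> Un_cv v l.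
Proof.
  intros Hc Hv eps Heps. destruct (Hc eps Heps) as [M HM].
  exists (Nat.max N M). intros n Hn. rewrite Hv by lia. apply HM. lia.
Qed.

Lemma min_exists (P : nat -> Prop) : (exists n, P n) -> exists n, P n /\ forall m, (m < n)%nat -> ~ P m.
Proof.
  intros [n Hn]. revert Hn. induction n as [n IH] using (well_founded_induction Wf_nat.lt_wf). intro Hn.
  destruct (classic (exists m, (m < n)%nat /\ P m)) as [[m [Hm Pm]]|Hno].
  - exact (IH m Hm Pm).
  - exists n. split; auto. intros m Hm Pm. apply Hno. eauto.
Qed.

Lemma even_count {A} (s : A -> A) : forall n (l : list A), length l = n -> NoDup l ->
  (forall c, In c l -> In (s c) l) -> (forall c, In c l -> s (s c) = c /\ s c <> c) ->
  exists m, n = (2 * m)%nat.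
Proof.
  intro n. induction n as [n IH] using (well_founded_induction Wf_nat.lt_wf). intros l Hl Hnd Hcl Hinv.
  destruct l as [|c l'].
  - exists 0%nat. simpl in Hl. lia.
  - assert (Hsc : In (s c) l').
    { destruct (Hcl c (or_introl eq_refl)) as [E|E]; auto.
      exfalso. apply (proj2 (Hinv c (or_introl eq_refl))). auto. }
    apply in_split in Hsc. destruct Hsc as [l1 [l2 E]]. subst l'.
    apply NoDup_cons_iff in Hnd. destruct Hnd as [Hnc Hnd2].
    destruct (NoDup_remove _ _ _ Hnd2) as [Hnd3 Hnin].
    simpl in Hl. rewrite length_app in Hl. simpl in Hl.
    destruct (IH (length (l1 ++ l2)) ltac:(rewrite length_app; lia) (l1 ++ l2) eq_refl) as [m Hm].
    + apply Hnd3.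
    + intros d Hd. assert (Hdl : In d (c :: l1 ++ s c :: l2)).
      { right. apply in_app_or in Hd. apply in_or_app. destruct Hd; auto. right; right; auto. }
      assert (Hsd := Hcl d Hdl). destruct (Hinv d Hdl) as [Hss Hne].
      destruct Hsd as [E|E].
      * exfalso. apply Hnin. rewrite E, Hss. auto.
      * apply in_app_or in E. destruct E as [E|[E|E]]; try (apply in_or_app; auto).
        exfalso. apply Hnc. assert (d = c). { rewrite <- Hss, <- E. apply (proj1 (Hinv c (or_introl eq_refl))). }
        subst. apply in_app_or in Hd. apply in_or_app. destruct Hd; auto. right; right; auto.
    + intros d Hd. apply Hinv. right. apply in_app_or in Hd. apply in_or_app. destruct Hd; auto. right; right; auto.
    + exists (S m). rewrite length_app in Hm. lia.
Qed.

Definition good (lam : R) := 0 < lam /\ lam < 1/2 /\ lam * lam - 5 * lam + 1 > 0.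

Lemma good_of (lam : R) : 0 < lam -> lam < (5 - sqrt 21) / 2 -> good lam.
Proof.
  intros h0 h1. assert (Hs : sqrt 21 * sqrt 21 = 21) by (apply sqrt_sqrt; lra).
  assert (Hs0 : 0 <= sqrt 21) by apply sqrt_pos.
  assert (Hs4 : 4 < sqrt 21) by nra.
  split; [lra|split]; [lra|]. nra.
Qed.

Lemma map_bound (lam : R) d z : good lam -> 0 <= z <= 1 -> 0 <= ifs_map lam d z <= 1.
Proof. intros [h0 [h1 h2]] Hz. rewrite ifs_off. destruct d; simpl; nra. Qed.

Lemma comp_bound (lam : R) c n z : good lam -> 0 <= z <= 1 -> 0 <= comp lam c n z <= 1.
Proof.
  intro G. revert z; induction n; intros z Hz; simpl; auto.
  apply IHn. apply map_bound; auto.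
Qed.

Lemma coding_bound (lam : R) x c : good lam -> is_coding lam x c -> 0 <= x <= 1.
Proof.
  intros G H. apply (lim_bound _ _ _ _ H). intro n. apply comp_bound; auto; lra.
Qed.

Lemma shift_coding (lam : R) x c : good lam -> is_coding lam x c ->
  exists z, is_coding lam z (shift c) /\ x = ifs_map lam (c 0%nat) z /\ 0 <= z <= 1.
Proof.
  intros G H. destruct G as [h0 h1] eqn:EG.
  exists ((/ lam) * x + (- off lam (c 0%nat) / lam)).
  assert (Hz : is_coding lam ((/ lam) * x + (- off lam (c 0%nat) / lam)) (shift c)).
  { unfold is_coding. apply (cv_affine_shift _ _ _ _ _ H).
    intro n. rewrite comp_S_shift, ifs_off. field. lra. }
  split; auto. split.
  - rewrite ifs_off. field. lra.
  - apply (coding_bound lam _ _ G Hz).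
Qed.

Lemma tails_equal (lam : R) : good lam -> forall k a b x, is_coding lam x a -> is_coding lam x b ->
  (forall j, (j < k)%nat -> a j = b j) ->
  exists y, is_coding lam y (tail a k) /\ is_coding lam y (tail b k).
Proof.
  intros G k. induction k; intros a b x Ha Hb Hj.
  - exists x. split; assumption.
  - destruct (shift_coding lam x a G Ha) as [za [Hza [Ea _]]].
    destruct (shift_coding lam x b G Hb) as [zb [Hzb [Eb _]]].
    rewrite (Hj 0%nat ltac:(lia)) in Ea.
    assert (za = zb).
    { rewrite Ea, !ifs_off in Eb. destruct G as [h0 _]. nra. }
    subst zb.
    apply (IHk (shift a) (shift b) za Hza Hzb). intros j Hjk. apply Hj. lia.
Qed.

Lemma L_disj (lam : R) y t1 t2 : good lam -> is_coding lam y t1 -> is_coding lam y t2 ->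
  t1 0%nat <> t2 0%nat -> 3 * lam - lam ^ 2 <= y <= 3 * lam.
Proof.
  intros G H1 H2 Hne.
  destruct (shift_coding lam y t1 G H1) as [z1 [_ [E1 B1]]].
  destruct (shift_coding lam y t2 G H2) as [z2 [_ [E2 B2]]].
  destruct G as [h0 [h1 h2]].
  rewrite ifs_off in E1, E2.
  destruct (t1 0%nat), (t2 0%nat); simpl in *; try congruence; nra.
Qed.

Lemma L_struct (lam : R) y t : good lam -> is_coding lam y t -> 3 * lam - lam ^ 2 <= y <= 3 * lam ->
  (t 0%nat = D2 /\ t 1%nat = D4) \/ (t 0%nat = D3 /\ t 1%nat = D1).
Proof.
  intros G H Hy.
  destruct (shift_coding lam y t G H) as [z [Hz [E1 B1]]].
  destruct (shift_coding lam z (shift t) G Hz) as [w [_ [E2 B2]]].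
  unfold shift in E2.
  destruct G as [h0 [h1 h2]].
  rewrite ifs_off in E1, E2.
  destruct (t 0%nat), (t 1%nat); simpl in *; auto; exfalso; nra.
Qed.

Definition swap (k : nat) (c : nat -> digit) : nat -> digit := fun n =>
  if Nat.eqb n k then (match c k with D2 => D3 | _ => D2 end)
  else if Nat.eqb n (S k) then (match c k with D2 => D1 | _ => D4 end)
  else c n.

Definition blk (c : nat -> digit) k := (c k = D2 /\ c (S k) = D4) \/ (c k = D3 /\ c (S k) = D1).

Lemma comp_two (lam : R) d m z : comp lam d (S (S m)) z =
  ifs_map lam (d 0%nat) (ifs_map lam (d 1%nat) (comp lam (fun j => d (S (S j))) m z)).
Proof. rewrite comp_S_shift, comp_S_shift. reflexivity. Qed.

Lemma swap_coding (lam : R) x c k : is_coding lam x c -> blk c k -> is_coding lam x (swap k c).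
Proof.
  intros H B. apply (cv_ev _ _ _ (k + 2)%nat H). intros n Hn.
  replace n with (k + S (S (n - k - 2)))%nat by lia.
  rewrite !comp_add, !comp_two.
  rewrite (comp_ext lam (swap k c) c k).
  2:{ intros j Hj. unfold swap. destruct (Nat.eqb_spec j k); [lia|].
      destruct (Nat.eqb_spec j (S k)); [lia|]. reflexivity. }
  f_equal.
  rewrite (comp_ext lam (fun j => tail (swap k c) k (S (S j))) (fun j => tail c k (S (S j)))).
  2:{ intros j _. unfold tail, swap. destruct (Nat.eqb_spec (k + S (S j)) k); [lia|].
      destruct (Nat.eqb_spec (k + S (S j)) (S k)); [lia|]. reflexivity. }
  unfold tail at 1 2 4 5. rewrite Nat.add_0_r, Nat.add_1_r. unfold swap.
  rewrite Nat.eqb_refl. destruct (Nat.eqb_spec (S k) k); [lia|]. rewrite Nat.eqb_refl.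
  destruct B as [[E1 E2]|[E1 E2]]; rewrite E1, E2; simpl; ring.
Qed.

Lemma swap_invol c k : blk c k -> swap k (swap k c) = c.
Proof.
  intro B. apply functional_extensionality. intro n.
  unfold swap at 1. unfold swap at 1 2 3. rewrite Nat.eqb_refl.
  destruct B as [[E1 E2]|[E1 E2]]; rewrite E1;
  destruct (Nat.eqb_spec n k); subst; [congruence| |congruence|];
  destruct (Nat.eqb_spec n (S k)); subst; congruence.
Qed.

Lemma swap_ne c k : blk c k -> swap k c <> c.
Proof.
  intros B E. assert (H := f_equal (fun f => f k) E). simpl in H. unfold swap in H.
  rewrite Nat.eqb_refl in H. destruct B as [[E1 _]|[E1 _]]; rewrite E1 in H; congruence.
Qed.

Theorem lemma2p30 (lam : R) (hlam0 : 0 < lam) (hlam1 : lam < (5 - sqrt 21) / 2) :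
  forall i : nat, (1 <= i)%nat -> forall x : R, ~ in_U lam (2 * i + 1) x.
Proof.
  intros i Hi x [_ [l [Hlen [Hnd Hiff]]]].
  assert (G := good_of lam hlam0 hlam1).
  destruct l as [|c1 [|c2 l'']]; simpl in Hlen; try lia.
  assert (H1 : is_coding lam x c1) by (apply Hiff; simpl; auto).
  assert (H2 : is_coding lam x c2) by (apply Hiff; simpl; auto).
  assert (Hne : c1 <> c2) by (intro E; subst; apply NoDup_cons_iff in Hnd; apply (proj1 Hnd); simpl; auto).
  assert (Hex : exists n, exists a b, is_coding lam x a /\ is_coding lam x b /\ a n <> b n).
  { destruct (classic (exists n, c1 n <> c2 n)) as [[n Hn]|Hno].
    - exists n, c1, c2. auto.
    - exfalso. apply Hne. apply functional_extensionality. intro n.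
      apply NNPP. intro E. apply Hno. eauto. }
  destruct (min_exists _ Hex) as [k [[a0 [b0 [Ha0 [Hb0 Hab]]]] Hmin]].
  assert (Hagree : forall a b, is_coding lam x a -> is_coding lam x b -> forall j, (j < k)%nat -> a j = b j).
  { intros a b Ha Hb j Hj. apply NNPP. intro E. apply (Hmin j Hj). exists a, b. auto. }
  destruct (tails_equal lam G k a0 b0 x Ha0 Hb0 (Hagree a0 b0 Ha0 Hb0)) as [y [Hya Hyb]].
  assert (Hy : 3 * lam - lam ^ 2 <= y <= 3 * lam).
  { apply (L_disj lam y _ _ G Hya Hyb). unfold tail. rewrite Nat.add_0_r. exact Hab. }
  assert (Hblk : forall c, is_coding lam x c -> blk c k).
  { intros c Hc. destruct (tails_equal lam G k c a0 x Hc Ha0 (Hagree c a0 Hc Ha0)) as [y' [Hy1 Hy2]].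
    assert (y' = y) by (apply (UL_sequence _ _ _ Hy2 Hya)). subst y'.
    destruct (L_struct lam y _ G Hy1 Hy) as [[E1 E2]|[E1 E2]]; unfold tail in E1, E2;
      rewrite Nat.add_0_r in E1; rewrite Nat.add_1_r in E2; [left|right]; auto. }
  set (L := c1 :: c2 :: l'') in *.
  destruct (even_count (swap k) (length L) L eq_refl Hnd) as [m Hm].
  - intros c Hc. apply Hiff. apply swap_coding; [apply Hiff; auto|]. apply Hblk, Hiff, Hc.
  - intros c Hc. assert (B := Hblk c (proj2 (Hiff c) Hc)). split; [apply swap_invol|apply swap_ne]; auto.
  - subst L. simpl in Hm. lia.
Qed.
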